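(* Let $X$ be a normed space and $Y$ a Banach space. Let $p$ and $\theta$ be nonnegative integer numbers with $p\neq1,3$. Suppose that an odd mapping $f:X\to Y$ satisfies $$\|D_f(x,y)\|\le\theta\left(\|x\|^p+\|y\|^p\right)$$ for all $x,y\in X$. Then there exist a unique additive function $A:X\to Y$ and a unique cubic function $C:X\to Y$ satisfying $$\|f(x)-A(x)-C(x)\|\le\frac{\theta}{6}\left[\frac{1}{|2^p-2|}+\frac{1}{|2^p-8|}\right]\|x\|^p$$ for all $x\in X$.
   Context: For a mapping $f:X\to Y$ define $$D_f(x,y)=3f(x+3y)-f(3x+y)-12[f(x+y)+f(x-y)]+16[f(x)+f(y)]-12f(2y)+4f(2x)$$ for $x,y\in X$. A function $g:X\to Y$ is additive if $g(x+y)=g(x)+g(y)$ for all $x,y\in X$, and cubic if $g(x+2y)-3g(x+y)+3g(x)-g(x-y)=6g(y)$ for all $x,y\in X$. *)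

(* Defs.v *)
From HB Require Import structures.
From mathcomp Require Import all_boot all_order all_algebra.
From mathcomp Require Import all_classical all_reals all_analysis.
Set Implicit Arguments. Unset Strict Implicit. Unset Printing Implicit Defensive.
Import Order.TTheory GRing.Theory Num.Theory.
Local Open Scope ring_scope.

Definition Dmix (X Y : zmodType) (f : X -> Y) (x y : X) : Y :=
  f (x + y *+ 3) *+ 3 - f (x *+ 3 + y)
  - (f (x + y) + f (x - y)) *+ 12 + (f x + f y) *+ 16
  - f (y *+ 2) *+ 12 + f (x *+ 2) *+ 4.

Definition additive_map (X Y : zmodType) (g : X -> Y) : Prop :=
  forall x y, g (x + y) = g x + g y.

Definition cubic_map (X Y : zmodType) (g : X -> Y) : Prop :=
  forall x y, g (x + y *+ 2) - g (x + y) *+ 3 + g x *+ 3 - g (x - y) = g y *+ 6.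

Definition odd_map (X Y : zmodType) (g : X -> Y) : Prop :=
  forall x, g (- x) = - g x.

(* Main.v *)
Require Import Defs.
From HB Require Import structures.
From mathcomp Require Import all_boot all_order all_algebra.
From mathcomp Require Import all_classical all_reals all_analysis.
From mathcomp Require Import ring.
Import Order.TTheory GRing.Theory Num.Theory.
Local Open Scope ring_scope.

Module H.
Set Implicit Arguments. Unset Strict Implicit. Unset Printing Implicit Defensive.
Import numFieldNormedType.Exports.
Local Open Scope classical_set_scope.
Local Open Scope ring_scope.
Section Idz.
Variable V : zmodType.
Definition idz : Type := (int * V)%type.
HB.instance Definition _ := GRing.Zmodule.on idz.
Definition idz_mul (a b : idz) : idz := (a.1 * b.1, a.2 *~ b.1 + b.2 *~ a.1).
Definition idz_one : idz := (1, 0).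
Lemma idz_mulA : associative idz_mul.
Proof.
move=> [a u] [b v] [c w]; rewrite /idz_mul /=; congr pair; first by rewrite mulrA.
by rewrite ?mulrzDl ?mulrzDr -?mulrzA addrA (mulrC c a) (mulrC b a).
Qed.
Lemma idz_mulC : commutative idz_mul.
Proof. by move=> [a u] [b v]; rewrite /idz_mul /= mulrC addrC. Qed.
Lemma idz_mul1 : left_id idz_one idz_mul.
Proof. by move=> [a u]; rewrite /idz_mul /= mul1r mulr1z mul0rz ?addr0 ?add0r. Qed.
Lemma idz_mulDl : left_distributive idz_mul +%R.
Proof.
move=> [a u] [b v] [c w]; rewrite /idz_mul /=; congr pair; first by rewrite mulrDl.
by rewrite mulrzDl mulrzDr addrACA.
Qed.
Lemma idz_one_neq0 : idz_one != 0.
Proof. by rewrite /idz_one; apply/eqP => -[]. Qed.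
HB.instance Definition _ := GRing.Zmodule_isComNzRing.Build idz
  idz_mulA idz_mulC idz_mul1 idz_mulDl idz_one_neq0.
Definition emb (v : V) : idz := (0%R, v).
Lemma embD u v : emb (u + v) = emb u + emb v. Proof. by []. Qed.
Lemma embN u : emb (- u) = - emb u. Proof. by []. Qed.
Lemma embB u v : emb (u - v) = emb u - emb v. Proof. by []. Qed.
Lemma emb0 : emb 0 = 0. Proof. by []. Qed.
Lemma embMn u n : emb (u *+ n) = emb u *+ n.
Proof. elim: n => [|n IH]; first by []. by rewrite !mulrS embD IH. Qed.
Lemma embMz u z : emb (u *~ z) = emb u *~ z.
Proof. by case: z => n; rewrite ?NegzE ?mulrNz /= ?embN; rewrite -!pmulrn embMn. Qed.
Lemma emb_inj u v : emb u = emb v -> u = v.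
Proof. by case. Qed.
End Idz.

Ltac zlin := apply: emb_inj; rewrite ?(embD, embB, embN, embMn, embMz, emb0); ring.
Lemma Dmix_norm (R : numDomainType) (X : zmodType) (Y : normedZmodType R) (w : X -> Y) x y :
  `|Dmix w x y| <= `|w (x + y*+3)| *+ 3 + `|w (x*+3 + y)| + (`|w (x+y)| + `|w (x-y)|) *+ 12
    + (`|w x| + `|w y|) *+ 16 + `|w (y*+2)| *+ 12 + `|w (x*+2)| *+ 4.
Proof.
rewrite /Dmix.
apply: le_trans (ler_normD _ _) _; rewrite normrMn lerD2r.
apply: le_trans (ler_normB _ _) _; rewrite normrMn lerD2r.
apply: le_trans (ler_normD _ _) _; rewrite normrMn; apply: lerD; last first.
  by rewrite lerMn2r /= ler_normD.
apply: le_trans (ler_normB _ _) _; rewrite normrMn; apply: lerD; last first.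
  by rewrite lerMn2r /= ler_normD.
apply: le_trans (ler_normB _ _) _; rewrite normrMn //.
Qed.
Lemma Dmix_norm_le (R : numDomainType) (X : zmodType) (Y : normedZmodType R) (w : X -> Y) (g : X -> R) x y :
  (forall z, `|w z| <= g z) ->
  `|Dmix w x y| <= g (x + y*+3) *+ 3 + g (x*+3 + y) + (g (x+y) + g (x-y)) *+ 12
    + (g x + g y) *+ 16 + g (y*+2) *+ 12 + g (x*+2) *+ 4.
Proof.
move=> H; apply: le_trans (Dmix_norm w x y) _.
by repeat apply: lerD; rewrite ?lerMn2r /= ?H ?orbT //; apply: lerD.
Qed.

Lemma Dmix_add (X Y : zmodType) (f g : X -> Y) x y :
  Dmix (fun z => f z + g z) x y = Dmix f x y + Dmix g x y.
Proof. rewrite /Dmix; zlin. Qed.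

Lemma Dmix_scale (R : pzRingType) (X Y : lmodType R) (w : X -> Y) (a b : R) x y :
  Dmix (fun z => a *: w (b *: z)) x y = a *: Dmix w (b *: x) (b *: y).
Proof.
rewrite /Dmix !(scalerMnr, scalerDr, scalerBr, scalerN); zlin.
Qed.

Lemma zero_geo (R : realType) (v K q : R) : 0 <= q -> q < 1 ->
  (forall n, v <= K * q ^+ n) -> v <= 0.
Proof.
move=> q0 q1 H.
have := @cvg_geometric R K q; rewrite ger0_norm // => /(_ q1) G.
apply: (cvgr_to_ge G); apply: nearW => n /=; exact: H.
Qed.

Section Tail.
Variables (R : realType) (Y : completeNormedModType R) (s : nat -> Y) (B q : R).
Hypotheses (q0 : 0 <= q) (q1 : q < 1) (B0 : 0 <= B).
Hypothesis hs : forall n, `|s n.+1 - s n| <= B * q ^+ n.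

Lemma tail_dist n k : `|s (n + k)%N - s n| <= B * q ^+ n * (1 - q ^+ k) / (1 - q).
Proof.
have q10 : 1 - q != 0 by rewrite subr_eq0 eq_sym lt_eqF.
elim: k => [|k IH]; first by rewrite addn0 subrr normr0 expr0 subrr !mulr0 mul0r.
rewrite addnS; apply: le_trans (ler_distD (s (n + k)%N) _ _) _.
rewrite addrC; apply: le_trans (lerD IH (hs _)) _; rewrite exprD.
rewrite le_eqVlt; apply/orP; left; apply/eqP; rewrite exprS; move: (q ^+ k) (q ^+ n) => a b; field; by rewrite subr_eq0 eq_sym lt_eqF.
Qed.

Lemma tail_cvg : cvgn s.
Proof.
set d := fun n => s n.+1 - s n.
have Hs n : s n = s 0%N + series d n.
  by rewrite /series /= telescope_sumr // addrC subrK.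
have -> : s = (fun n => s 0%N + series d n) by apply: funext => n; exact: Hs.
apply: is_cvgD; first exact: is_cvg_cst.
apply: normed_cvg.
apply: (@series_le_cvg _ _ (geometric B q)) => //.
- by move=> n; rewrite normr_ge0.
- by move=> n; rewrite /geometric /= mulr_ge0 // exprn_ge0.
- by apply: is_cvg_geometric_series; rewrite ger0_norm.
Qed.

End Tail.

Section Tail2.
Variables (R : realType) (Y : completeNormedModType R) (s : nat -> Y) (B q : R).
Hypotheses (q0 : 0 <= q) (q1 : q < 1) (B0 : 0 <= B).
Hypothesis hs : forall n, `|s n.+1 - s n| <= B * q ^+ n.

Lemma tail_lim n : `|limn s - s n| <= B * q ^+ n / (1 - q).
Proof.
have cs : s @ \oo --> limn s := tail_cvg q0 q1 B0 hs.
have c2 : `|s m - s n| @[m --> \oo] --> (`|limn s - s n| : R).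
  apply: cvg_norm; apply: cvgB => //; exact: cvg_cst.
apply: (cvgr_to_le c2).
exists n => // m /= nm.
rewrite -(subnKC nm) (le_trans (tail_dist q1 hs n (m - n))) //.
have q1' : 0 < 1 - q by rewrite subr_gt0.
rewrite ler_pM2r ?invr_gt0 // ler_piMr ?mulr_ge0 ?exprn_ge0 //.
by rewrite lerBlDr lerDl exprn_ge0.
Qed.
End Tail2.

Lemma zero_geoV (R : realType) (Y : normedModType R) (v : Y) (K q : R) : 0 <= q -> q < 1 ->
  (forall n, `|v| <= K * q ^+ n) -> v = 0.
Proof. by move=> q0 q1 H; apply/eqP; rewrite -normr_le0; exact: zero_geo q0 q1 H. Qed.

Section Stab.
Set Default Proof Using "All".
Variables (R : realType) (X : normedModType R) (Y : completeNormedModType R).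
Variables (u : X -> Y) (c l rho e : R) (N : X -> R).
Hypotheses (hN : forall x, N (c *: x) = rho * N x) (hN0 : forall x, 0 <= N x).
Hypotheses (rho0 : 0 <= rho) (hq : `|l| * rho < 1) (e0 : 0 <= e).
Hypothesis hu : forall x, `|l *: u (c *: x) - u x| <= e * N x.

Definition sq n x := l ^+ n *: u (c ^+ n *: x).
Let q := `|l| * rho.
Let q0 : 0 <= q. Proof. by rewrite mulr_ge0. Qed.

Lemma Npow n x : N (c ^+ n *: x) = rho ^+ n * N x.
Proof.
elim: n => [|n IH]; first by rewrite !expr0 scale1r mul1r.
by rewrite exprS -scalerA hN IH mulrA -exprS.
Qed.

Lemma sq_step x n : `|sq n.+1 x - sq n x| <= (e * N x) * q ^+ n.
Proof.
have E : sq n.+1 x - sq n x = l ^+ n *: (l *: u (c *: (c ^+ n *: x)) - u (c ^+ n *: x)).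
  by rewrite /sq scalerBr [l ^+ n *: (l *: _)]scalerA -exprSr [c *: (c ^+ n *: x)]scalerA -exprS.
rewrite E normrZ normrX (le_trans (ler_wpM2l _ (hu _))) ?exprn_ge0 //.
by rewrite Npow /q exprMn; rewrite le_eqVlt; apply/orP; left; apply/eqP; ring.
Qed.

Definition Ulim x := limn (fun n => sq n x).

Lemma Ulim_tail x n : `|Ulim x - sq n x| <= e * N x * q ^+ n / (1 - q).
Proof.
apply: (tail_lim q0 hq _ (fun n => sq_step x n)).
by rewrite mulr_ge0.
Qed.

Lemma Ulim_bound x : `|Ulim x - u x| <= e / (1 - q) * N x.
Proof.
have := Ulim_tail x 0; rewrite /sq !expr0 !scale1r mulr1.
by rewrite mulrAC.
Qed.

Lemma Ulim_scale x : l *: Ulim (c *: x) = Ulim x.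
Proof.
apply/eqP; rewrite -subr_eq0; apply/eqP.
pose K := `|l| * (e * N (c *: x) / (1 - q)) + e * N x * q / (1 - q).
apply: (@zero_geoV _ _ _ K q) => // n.
have E : l *: Ulim (c *: x) - Ulim x =
   l *: (Ulim (c *: x) - sq n (c *: x)) - (Ulim x - sq n.+1 x).
  rewrite scalerBr; have -> : l *: sq n (c *: x) = sq n.+1 x.
    by rewrite /sq scalerA -exprS scalerA -exprSr.
  by rewrite opprB addrA subrK.
rewrite E (le_trans (ler_normB _ _)) // normrZ.
have q1 : 0 < 1 - q by rewrite subr_gt0.
apply: le_trans (lerD (ler_wpM2l (normr_ge0 _) (Ulim_tail _ n)) (Ulim_tail x n.+1)) _.
rewrite /K exprS le_eqVlt; apply/orP; left; apply/eqP.
by move: (q ^+ n) => t; ring.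
Qed.

Lemma Ulim_odd : (forall x, u (- x) = - u x) -> forall x, Ulim (- x) = - Ulim x.
Proof.
move=> hodd x; apply/eqP; rewrite -subr_eq0 opprK; apply/eqP.
pose K := e * N (- x) / (1 - q) + e * N x / (1 - q).
apply: (@zero_geoV _ _ _ K q) => // n.
have E : Ulim (- x) + Ulim x = (Ulim (- x) - sq n (- x)) + (Ulim x - sq n x).
  have -> : sq n (- x) = - sq n x by rewrite /sq scalerN hodd scalerN.
  by rewrite opprK addrACA subrr addr0.
rewrite E (le_trans (ler_normD _ _)) //.
apply: le_trans (lerD (Ulim_tail _ n) (Ulim_tail x n)) _.
rewrite /K le_eqVlt; apply/orP; left; apply/eqP.
by move: (q ^+ n) => t; ring.
Qed.

Lemma Ulim_D (M : R) : 0 <= M -> (forall x y, `|Dmix u x y| <= M * (N x + N y)) ->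
  forall x y, Dmix Ulim x y = 0.
Proof.
move=> M0 hD x y.
pose g z := e / (1 - q) * N z.
pose K := g (x + y*+3) *+ 3 + g (x*+3 + y) + (g (x+y) + g (x-y)) *+ 12
    + (g x + g y) *+ 16 + g (y*+2) *+ 12 + g (x*+2) *+ 4 + M * (N x + N y).
apply: (@zero_geoV _ _ _ K q) => // n.
have E : Dmix Ulim x y = Dmix (fun z => Ulim z - sq n z) x y +
   l ^+ n *: Dmix u (c ^+ n *: x) (c ^+ n *: y).
  rewrite -Dmix_scale -Dmix_add; congr Dmix; apply: funext => z.
  by rewrite subrK.
rewrite E (le_trans (ler_normD _ _)) //.
have H1 := @Dmix_norm_le _ _ _ (fun z => Ulim z - sq n z) (fun z => g z * q ^+ n) x y.
have Tz z : `|Ulim z - sq n z| <= g z * q ^+ n.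
  apply: le_trans (Ulim_tail z n) _; rewrite /g le_eqVlt; apply/orP; left; apply/eqP.
  move: (q ^+ n) => t; ring.
have {H1}H1 := H1 Tz.
have H2 : `|l ^+ n *: Dmix u (c ^+ n *: x) (c ^+ n *: y)| <= M * (N x + N y) * q ^+ n.
  rewrite normrZ normrX; apply: le_trans (ler_wpM2l (exprn_ge0 _ (normr_ge0 _)) (hD _ _)) _.
  rewrite !Npow /q exprMn le_eqVlt; apply/orP; left; apply/eqP.
  move: (rho ^+ n) (`|l| ^+ n) => a b; ring.
apply: le_trans (lerD H1 H2) _.
rewrite /K le_eqVlt; apply/orP; left; apply/eqP.
move: (q ^+ n) => t; clearbody g; ring.
Qed.
End Stab.

Lemma DmixE (X Y : zmodType) (F : X -> Y) u v a1 a2 a3 a4 a5 a6 a7 a8 :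
 u + v*+3 = a1 -> u*+3 + v = a2 -> u + v = a3 -> u - v = a4 -> u = a5 -> v = a6 ->
 v*+2 = a7 -> u*+2 = a8 ->
 Dmix F u v = F a1 *+3 - F a2 - (F a3 + F a4)*+12 + (F a5 + F a6)*+16 - F a7 *+12 + F a8 *+4.
Proof. by move=> <- <- <- <- <- <- <- <-. Qed.

Lemma mulrnI_l (R : numFieldType) (V : lmodType R) (n : nat) (u v : V) :
  (0 < n)%N -> u *+ n = v *+ n -> u = v.
Proof.
move=> n0 E; have nz : (n%:R : R) != 0 by rewrite pnatr_eq0 -lt0n.
by rewrite -[u]scale1r -[v]scale1r -(mulVf nz) -!scalerA !scaler_nat E.
Qed.

Lemma comb_step (V : zmodType) (G e : V) (c : int) : 0 = e -> G - e *~ c = 0 -> G = 0.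
Proof. by move=> <-; rewrite mul0rz subr0. Qed.

Definition tfree (Y : zmodType) := forall n (u v : Y), (0 < n)%N -> u *+ n = v *+ n -> u = v.

Lemma odd0 (X Y : zmodType) (F : X -> Y) : tfree Y ->
  (forall x, F (- x) = - F x) -> F 0 = 0.
Proof.
move=> hinj hodd; have h := hodd 0; rewrite oppr0 in h.
apply: (hinj 2%N) => //.
by rewrite mul0rn mulr2n {2}h subrr.
Qed.

Lemma cubic_of (X Y : zmodType) (F : X -> Y) : tfree Y ->
  (forall x y, Dmix F x y = 0) -> (forall x, F (x *+ 2) = F x *+ 8) ->
  (forall x, F (- x) = - F x) -> cubic_map F.
Proof.
move=> hinj hD0 h2 hodd; have F0 := odd0 hinj hodd; move=> x y.
have H0 := @DmixE _ _ F (- (x + y)) (x - y) ((x - y *+ 2) *+ 2) (- ((x + y *+ 2) *+ 2)) (- ((y) *+ 2)) (- ((x) *+ 2)) (- (x + y)) (x - y) ((x - y) *+ 2) (- ((x + y) *+ 2)) ltac:(zlin) ltac:(zlin) ltac:(zlin) ltac:(zlin) ltac:(zlin) ltac:(zlin) ltac:(zlin) ltac:(zlin).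
rewrite hD0 ?hodd ?h2 ?F0 in H0.
have H1 := @DmixE _ _ F (- (x - y)) (x + y) ((x + y *+ 2) *+ 2) (- ((x - y *+ 2) *+ 2)) ((y) *+ 2) (- ((x) *+ 2)) (- (x - y)) (x + y) ((x + y) *+ 2) (- ((x - y) *+ 2)) ltac:(zlin) ltac:(zlin) ltac:(zlin) ltac:(zlin) ltac:(zlin) ltac:(zlin) ltac:(zlin) ltac:(zlin).
rewrite hD0 ?hodd ?h2 ?F0 in H1.
apply: (hinj 64%N) => //.
apply/eqP; rewrite -subr_eq0; apply/eqP.
apply: (comb_step (c := (-1)%Z) H0).
apply: (comb_step (c := (3)%Z) H1).
move: (F (y)) (F (x - y *+ 2)) (F (x - y)) (F (x)) (F (x + y)) (F (x + y *+ 2)).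
intros; zlin.
Qed.

Lemma additive_of (X Y : zmodType) (F : X -> Y) : tfree Y ->
  (forall x y, Dmix F x y = 0) -> (forall x, F (x *+ 2) = F x *+ 2) ->
  (forall x, F (- x) = - F x) -> additive_map F.
Proof.
move=> hinj hD0 h2 hodd; have F0 := odd0 hinj hodd; move=> x y.
have H0 := @DmixE _ _ F (- (x - y)) (- (x + y)) (- ((x *+ 2 + y) *+ 2)) (- ((x *+ 2 - y) *+ 2)) (- ((x) *+ 2)) ((y) *+ 2) (- (x - y)) (- (x + y)) (- ((x + y) *+ 2)) (- ((x - y) *+ 2)) ltac:(zlin) ltac:(zlin) ltac:(zlin) ltac:(zlin) ltac:(zlin) ltac:(zlin) ltac:(zlin) ltac:(zlin).
rewrite hD0 ?hodd ?h2 ?F0 in H0.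
have H1 := @DmixE _ _ F (- (x + y)) (- (x - y)) (- ((x *+ 2 - y) *+ 2)) (- ((x *+ 2 + y) *+ 2)) (- ((x) *+ 2)) (- ((y) *+ 2)) (- (x + y)) (- (x - y)) (- ((x - y) *+ 2)) (- ((x + y) *+ 2)) ltac:(zlin) ltac:(zlin) ltac:(zlin) ltac:(zlin) ltac:(zlin) ltac:(zlin) ltac:(zlin) ltac:(zlin).
rewrite hD0 ?hodd ?h2 ?F0 in H1.
have H2 := @DmixE _ _ F (- (x + y)) (x) (x *+ 2 - y) (- (x *+ 2 + y *+ 3)) (- (y)) (- (x *+ 2 + y)) (- (x + y)) (x) ((x) *+ 2) (- ((x + y) *+ 2)) ltac:(zlin) ltac:(zlin) ltac:(zlin) ltac:(zlin) ltac:(zlin) ltac:(zlin) ltac:(zlin) ltac:(zlin).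
rewrite hD0 ?hodd ?h2 ?F0 in H2.
have H3 := @DmixE _ _ F (- (x)) (x + y) (x *+ 2 + y *+ 3) (- (x *+ 2 - y)) (y) (- (x *+ 2 + y)) (- (x)) (x + y) ((x + y) *+ 2) (- ((x) *+ 2)) ltac:(zlin) ltac:(zlin) ltac:(zlin) ltac:(zlin) ltac:(zlin) ltac:(zlin) ltac:(zlin) ltac:(zlin).
rewrite hD0 ?hodd ?h2 ?F0 in H3.
have H4 := @DmixE _ _ F (- (x + y)) (x - y) ((x - y *+ 2) *+ 2) (- ((x + y *+ 2) *+ 2)) (- ((y) *+ 2)) (- ((x) *+ 2)) (- (x + y)) (x - y) ((x - y) *+ 2) (- ((x + y) *+ 2)) ltac:(zlin) ltac:(zlin) ltac:(zlin) ltac:(zlin) ltac:(zlin) ltac:(zlin) ltac:(zlin) ltac:(zlin).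
rewrite hD0 ?hodd ?h2 ?F0 in H4.
have H5 := @DmixE _ _ F (- (y)) (- (x - y)) (- (x *+ 3 - y *+ 2)) (- (x + y *+ 2)) (- (x)) (x - y *+ 2) (- (y)) (- (x - y)) (- ((x - y) *+ 2)) (- ((y) *+ 2)) ltac:(zlin) ltac:(zlin) ltac:(zlin) ltac:(zlin) ltac:(zlin) ltac:(zlin) ltac:(zlin) ltac:(zlin).
rewrite hD0 ?hodd ?h2 ?F0 in H5.
have H6 := @DmixE _ _ F (- (x - y)) (- (y)) (- (x + y *+ 2)) (- (x *+ 3 - y *+ 2)) (- (x)) (- (x - y *+ 2)) (- (x - y)) (- (y)) (- ((y) *+ 2)) (- ((x - y) *+ 2)) ltac:(zlin) ltac:(zlin) ltac:(zlin) ltac:(zlin) ltac:(zlin) ltac:(zlin) ltac:(zlin) ltac:(zlin).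
rewrite hD0 ?hodd ?h2 ?F0 in H6.
have H7 := @DmixE _ _ F (- (x - y)) (x + y) ((x + y *+ 2) *+ 2) (- ((x - y *+ 2) *+ 2)) ((y) *+ 2) (- ((x) *+ 2)) (- (x - y)) (x + y) ((x + y) *+ 2) (- ((x - y) *+ 2)) ltac:(zlin) ltac:(zlin) ltac:(zlin) ltac:(zlin) ltac:(zlin) ltac:(zlin) ltac:(zlin) ltac:(zlin).
rewrite hD0 ?hodd ?h2 ?F0 in H7.
apply: (hinj 192%N) => //.
apply/eqP; rewrite -subr_eq0; apply/eqP.
apply: (comb_step (c := (-5)%Z) H0).
apply: (comb_step (c := (-3)%Z) H1).
apply: (comb_step (c := (-3)%Z) H2).
apply: (comb_step (c := (1)%Z) H3).
apply: (comb_step (c := (-5)%Z) H4).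
apply: (comb_step (c := (1)%Z) H5).
apply: (comb_step (c := (3)%Z) H6).
apply: (comb_step (c := (3)%Z) H7).
move: (F (y)) (F (x - y *+ 2)) (F (x - y)) (F (x)) (F (x + y)) (F (x + y *+ 2)) (F (x *+ 2 - y)) (F (x *+ 2 + y)) (F (x *+ 2 + y *+ 3)) (F (x *+ 3 - y *+ 2)).
intros; zlin.
Qed.

End H.

Module H2.
Import H.
Set Implicit Arguments. Unset Strict Implicit. Unset Printing Implicit Defensive.
Import numFieldNormedType.Exports.
Local Open Scope classical_set_scope.
Local Open Scope ring_scope.
Ltac zlin := apply: emb_inj; rewrite ?(embD, embB, embN, embMn, embMz, emb0); ring.

Lemma tfree_lmod (R : numFieldType) (V : lmodType R) : tfree V.
Proof. by move=> n u v; apply: mulrnI_l. Qed.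

Lemma DxxE (X Y : zmodType) (F : X -> Y) x : F 0 = 0 ->
  Dmix F x x = (F (x *+ 4) - F (x *+ 2) *+ 10 + F x *+ 16) *+ 2.
Proof.
move=> F0.
rewrite (@DmixE _ _ F x x (x *+ 4) (x *+ 4) (x *+ 2) 0 x x (x *+ 2) (x *+ 2)
  ltac:(zlin) ltac:(zlin) ltac:(zlin) ltac:(zlin) ltac:(zlin) ltac:(zlin) ltac:(zlin) ltac:(zlin)).
rewrite F0; move: (F (x *+ 4)) (F (x *+ 2)) (F x) => a b c; zlin.
Qed.

Lemma gE (X Y : zmodType) (F : X -> Y) x :
  (F ((x *+ 2) *+ 2) - F (x *+ 2) *+ 2) - (F (x *+ 2) - F x *+ 2) *+ 8 =
  F (x *+ 4) - F (x *+ 2) *+ 10 + F x *+ 16.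
Proof.
have -> : (x *+ 2) *+ 2 = x *+ 4 by rewrite -mulrnA.
move: (F (x *+ 4)) (F (x *+ 2)) (F x) => a b c; zlin.
Qed.

Lemma hE (X Y : zmodType) (F : X -> Y) x :
  (F ((x *+ 2) *+ 2) - F (x *+ 2) *+ 8) - (F (x *+ 2) - F x *+ 8) *+ 2 =
  F (x *+ 4) - F (x *+ 2) *+ 10 + F x *+ 16.
Proof.
have -> : (x *+ 2) *+ 2 = x *+ 4 by rewrite -mulrnA.
move: (F (x *+ 4)) (F (x *+ 2)) (F x) => a b c; zlin.
Qed.

Lemma Dmix_2 (X Y : zmodType) (F : X -> Y) x y :
  Dmix (fun z => F (z *+ 2)) x y = Dmix F (x *+ 2) (y *+ 2).
Proof.
rewrite (@DmixE _ _ F (x *+ 2) (y *+ 2) ((x + y *+ 3) *+ 2) ((x *+ 3 + y) *+ 2)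
  ((x + y) *+ 2) ((x - y) *+ 2) (x *+ 2) (y *+ 2) ((y *+ 2) *+ 2) ((x *+ 2) *+ 2)
  ltac:(zlin) ltac:(zlin) ltac:(zlin) ltac:(zlin) ltac:(zlin) ltac:(zlin) ltac:(zlin) ltac:(zlin)).
by [].
Qed.

Lemma Dmix_lin (X Y : zmodType) (F G : X -> Y) k x y :
  Dmix (fun z => F z - G z *+ k) x y = Dmix F x y - Dmix G x y *+ k.
Proof. rewrite /Dmix; zlin. Qed.
End H2.

Module H3.
Import H H2.
Set Implicit Arguments. Unset Strict Implicit. Unset Printing Implicit Defensive.
Import numFieldNormedType.Exports.
Local Open Scope classical_set_scope.
Local Open Scope ring_scope.

Lemma stab2 (R : realType) (X : normedModType R) (Y : completeNormedModType R)
  (u : X -> Y) (k p : nat) (t : R) :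
  0 <= t -> (0 < k)%N -> (2:R) ^+ p != k%:R ->
  (forall x, `|u (x *+ 2) - u x *+ k| <= t * `|x| ^+ p) ->
  exists U : X -> Y, [/\ forall x, `|U x - u x| <= t / `|2 ^+ p - k%:R| * `|x| ^+ p,
     forall x, U (x *+ 2) = U x *+ k,
     (forall x, u (- x) = - u x) -> forall x, U (- x) = - U x &
     forall M, 0 <= M -> (forall x y, `|Dmix u x y| <= M * (`|x| ^+ p + `|y| ^+ p)) ->
       forall x y, Dmix U x y = 0].
Proof.
move=> t0 k0 hk hu.
have kR : (0 : R) < k%:R by rewrite ltr0n.
have kR0 : (k%:R : R) != 0 by rewrite gt_eqF.
set N := fun x : X => `|x| ^+ p.
have hN0 x : 0 <= N x by rewrite /N exprn_ge0.
have p0 : (0 : R) < 2 ^+ p by rewrite exprn_gt0.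
case: (ltrgtP ((2:R) ^+ p) k%:R) => [lt|gt|eq]; last by rewrite eq eqxx in hk.
-
  have hN x : N (2 *: x) = 2 ^+ p * N x.
    by rewrite /N normrZ exprMn ger0_norm.
  have rho0 : (0 : R) <= 2 ^+ p by rewrite ltW.
  have hq : `|k%:R^-1| * 2 ^+ p < 1 :> R.
    by rewrite ger0_norm ?invr_ge0 ?ler0n // mulrC ltr_pdivrMr // mul1r.
  have e0 : 0 <= t / k%:R by rewrite divr_ge0.
  have hu' x : `|k%:R^-1 *: u (2 *: x) - u x| <= t / k%:R * N x.
    have -> : k%:R^-1 *: u (2 *: x) - u x = k%:R^-1 *: (u (x *+ 2) - u x *+ k).
      by rewrite scalerBr -[u x *+ k]scaler_nat scalerA mulVf // scale1r scaler_nat.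
    rewrite normrZ ger0_norm ?invr_ge0 ?ler0n //.
    apply: le_trans (ler_wpM2l _ (hu x)) _; first by rewrite invr_ge0 ler0n.
    by rewrite le_eqVlt; apply/orP; left; apply/eqP; rewrite /N; ring.
  exists (Ulim u 2 k%:R^-1); split.
  + move=> x; apply: le_trans (Ulim_bound hN hN0 rho0 hq e0 hu' x) _.
    rewrite le_eqVlt; apply/orP; left; apply/eqP; congr (_ * _).
    rewrite ger0_norm ?invr_ge0 ?ler0n //; field; rewrite subr_eq0 gt_eqF //.
  + move=> x; have := Ulim_scale hN hN0 rho0 hq e0 hu' x.
    move=> E; by rewrite -E -[(_ *: _) *+ k]scaler_nat scalerA mulfV // scale1r scaler_nat.
  + move=> hodd; exact: (Ulim_odd hN hN0 rho0 hq e0 hu' hodd).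
  + move=> M M0 hD; apply: (Ulim_D hN hN0 rho0 hq e0 hu' M0 hD).
-
  have two0 : (2 : R) != 0 by rewrite pnatr_eq0.
  have hN x : N (2^-1 *: x) = (2 ^+ p)^-1 * N x.
    by rewrite /N normrZ exprMn ger0_norm ?invr_ge0 // exprVn.
  have rho0 : (0 : R) <= (2 ^+ p)^-1 by rewrite invr_ge0 ltW.
  have hq : `|k%:R| * (2 ^+ p)^-1 < 1 :> R.
    by rewrite ger0_norm ?ler0n // ltr_pdivrMr // mul1r.
  have e0 : 0 <= t / 2 ^+ p by rewrite divr_ge0 // ltW.
  have half (x : X) : (2:R)^-1 *: (x *+ 2) = x by rewrite -[x *+ 2]scaler_nat scalerA mulVf ?scale1r.
  have hu' x : `|k%:R *: u (2^-1 *: x) - u x| <= t / 2 ^+ p * N x.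
    set x' := 2^-1 *: x.
    have xx : x = x' *+ 2 by rewrite /x' -[_ *+ 2]scaler_nat scalerA mulfV ?scale1r.
    have -> : u x = u (x' *+ 2) by rewrite -xx.
    rewrite scaler_nat distrC; apply: le_trans (hu x') _.
    rewrite /x' -/(N (2^-1 *: x)) hN le_eqVlt; apply/orP; left; apply/eqP; field; by rewrite gt_eqF.
  exists (Ulim u (2^-1) k%:R); split.
  + move=> x; apply: le_trans (Ulim_bound hN hN0 rho0 hq e0 hu' x) _.
    rewrite le_eqVlt; apply/orP; left; apply/eqP; congr (_ * _).
    rewrite ger0_norm ?ler0n //; field; rewrite ?subr_eq0 ?gt_eqF //.
  + move=> x; rewrite -(Ulim_scale hN hN0 rho0 hq e0 hu' (x *+ 2)) half.
    by rewrite scaler_nat.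
  + move=> hodd; exact: (Ulim_odd hN hN0 rho0 hq e0 hu' hodd).
  + move=> M M0 hD; apply: (Ulim_D hN hN0 rho0 hq e0 hu' M0 hD).
Qed.
End H3.

Module H4.
Import H H2 H3.
Set Implicit Arguments. Unset Strict Implicit. Unset Printing Implicit Defensive.
Import numFieldNormedType.Exports.
Local Open Scope classical_set_scope.
Local Open Scope ring_scope.
Ltac zlin := apply: emb_inj; rewrite ?(embD, embB, embN, embMn, embMz, emb0); ring.

Lemma cubicE (X Y : zmodType) (G : X -> Y) x y a1 a2 a3 a4 a5 : cubic_map G ->
  x + y *+ 2 = a1 -> x + y = a2 -> x - y = a3 -> x = a4 -> y = a5 ->
  0 = G a1 - G a2 *+ 3 + G a4 *+ 3 - G a3 - G a5 *+ 6.
Proof. by move=> H <- <- <- <- <-; rewrite H subrr. Qed.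

Lemma cubic_double (X Y : zmodType) (G : X -> Y) : tfree Y -> cubic_map G ->
  (forall x, G (- x) = - G x) /\ (forall x, G (x *+ 2) = G x *+ 8).
Proof.
move=> hinj hc.
have C1 := @cubicE _ _ G 0 0 0 0 0 0 0 hc ltac:(zlin) ltac:(zlin) ltac:(zlin) ltac:(zlin) ltac:(zlin).
have G0 : G 0 = 0.
  apply: (hinj 6%N) => //; apply/eqP; rewrite -subr_eq0; apply/eqP.
  apply: (comb_step (c := (-1)%Z) C1); move: (G 0) => a; zlin.
have hodd y : G (- y) = - G y.
  have B := @cubicE _ _ G (- y) y y 0 (- (y *+ 2)) (- y) y hc ltac:(zlin) ltac:(zlin) ltac:(zlin) ltac:(zlin) ltac:(zlin).
  have Cc := @cubicE _ _ G 0 (- y) (- (y *+ 2)) (- y) y 0 (- y) hc ltac:(zlin) ltac:(zlin) ltac:(zlin) ltac:(zlin) ltac:(zlin).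
  rewrite G0 in B Cc.
  apply: (hinj 6%N) => //; apply/eqP; rewrite -subr_eq0; apply/eqP.
  apply: (comb_step (c := (-1)%Z) B); apply: (comb_step (c := (-1)%Z) Cc).
  move: (G y) (G (- y)) (G (- (y *+ 2))) => a b c; zlin.
split => // y.
have A := @cubicE _ _ G 0 y (y *+ 2) y (- y) 0 y hc ltac:(zlin) ltac:(zlin) ltac:(zlin) ltac:(zlin) ltac:(zlin).
rewrite G0 hodd in A.
apply/eqP; rewrite -subr_eq0; apply/eqP.
apply: (comb_step (c := 1%Z) A).
move: (G y) (G (y *+ 2)) => a b; zlin.
Qed.

Lemma zero_lem (R : realType) (X Y : normedModType R) (G : X -> Y) (k p : nat) (K : R) :
  (0 < k)%N -> (2:R) ^+ p != k%:R -> 0 <= K ->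
  (forall x, G (x *+ 2) = G x *+ k) -> (forall z, `|G z| <= K * `|z| ^+ p) -> forall x, G x = 0.
Proof.
move=> k0 hk K0 h2 hb.
have hpow m x : G (x *+ 2 ^ m) = G x *+ k ^ m.
  elim: m x => [|m IH] x; first by rewrite expn0 !mulr1n.
  by rewrite expnSr mulrnA h2 IH -mulrnA -expnSr.
have kR : (0 : R) < k%:R by rewrite ltr0n.
have p0 : (0 : R) < 2 ^+ p by rewrite exprn_gt0.
have two0 : (2 : R) != 0 by rewrite pnatr_eq0.
case: (ltrgtP ((2:R) ^+ p) k%:R) => [lt|gt|eq]; last by rewrite eq eqxx in hk.
- move=> x; apply: (@zero_geoV _ _ _ (K * `|x| ^+ p) (2 ^+ p / k%:R)).
  + by rewrite divr_ge0 ?ltW.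
  + by rewrite ltr_pdivrMr // mul1r.
  + move=> n; have := hb (x *+ 2 ^ n); rewrite hpow !normrMn -[`|G x| *+ _]mulr_natr -[`|x| *+ _]mulr_natr !natrX.
    move=> H; rewrite -(ler_pM2r (exprn_gt0 n kR)); apply: le_trans H _.
    rewrite exprMn -exprM mulnC exprM expr_div_n le_eqVlt; apply/orP; left; apply/eqP.
    have kn : (k%:R : R) ^+ n != 0 by rewrite expf_neq0 // gt_eqF.
    move: (k%:R ^+ n) kn ((2:R) ^+ p ^+ n) => a ha b; field; exact: ha.
- move=> x; apply: (@zero_geoV _ _ _ (K * `|x| ^+ p) (k%:R / 2 ^+ p)).
  + by rewrite divr_ge0 ?ltW.
  + by rewrite ltr_pdivrMr // mul1r.
  + move=> n; set xn := ((2:R)^-1) ^+ n *: x.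
    have xx : x = xn *+ 2 ^ n.
      by rewrite /xn -scaler_nat scalerA natrX -exprMn mulfV // expr1n scale1r.
    rewrite {1}xx hpow normrMn -[`|_| *+ _]mulr_natr natrX.
    apply: le_trans (ler_wpM2r (exprn_ge0 _ (ler0n _ _)) (hb xn)) _.
    rewrite /xn normrZ exprMn ger0_norm ?invr_ge0 ?ler0n // -exprM mulnC exprM.
    rewrite expr_div_n le_eqVlt; apply/orP; left; apply/eqP.
    have e2 : ((2:R)^-1)^+p = (2^+p)^-1 by rewrite exprVn.
    rewrite e2 exprVn.
    have bn : ((2:R) ^+ p) ^+ n != 0 by rewrite expf_neq0 // gt_eqF.
    move: (((2:R) ^+ p) ^+ n) bn (k%:R ^+ n) => b hbn a; field; exact: hbn.
Qed.
End H4.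

Module H5.
Import H H2 H3 H4.
Set Implicit Arguments. Unset Strict Implicit. Unset Printing Implicit Defensive.
Import numFieldNormedType.Exports.
Local Open Scope classical_set_scope.
Local Open Scope ring_scope.
Ltac zlin := apply: emb_inj; rewrite ?(embD, embB, embN, embMn, embMz, emb0); ring.

Lemma pow2_neq (R : numDomainType) (p m : nat) : p <> m -> (2:R) ^+ p != (2 ^ m)%:R.
Proof.
move=> hpm; rewrite -natrX eqr_nat eqn_exp2l //; apply/eqP => E; exact: hpm.
Qed.

Lemma idA (V : zmodType) (u w : V) : u *+ 6 = (u + w) *+ 8 - (u *+ 2 + w *+ 8).
Proof. zlin. Qed.
Lemma idC (V : zmodType) (u w : V) : w *+ 6 = (u *+ 2 + w *+ 8) - (u + w) *+ 2.
Proof. zlin. Qed.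

Lemma uniq_lem (R : realType) (X Y : normedModType R) (a c : X -> Y) (p : nat) (B : R) :
  p <> 1%N -> p <> 3%N -> 0 <= B -> additive_map a -> cubic_map c ->
  (forall z, `|a z + c z| <= B * `|z| ^+ p) -> (forall z, a z = 0) /\ (forall z, c z = 0).
Proof.
move=> hp1 hp3 B0 ha hc hb.
have a2 z : a (z *+ 2) = a z *+ 2 by rewrite mulr2n ha.
have c2 := (cubic_double (@tfree_lmod R Y) hc).2.
have N2 (z : X) : `|z *+ 2| ^+ p = (2:R) ^+ p * `|z| ^+ p.
  by rewrite normrMn -[`|z| *+ 2]mulr_natr exprMn mulrC.
have p0 : (0 : R) <= 2 ^+ p by rewrite exprn_ge0.
have Nz z : 0 <= `|z| ^+ p by rewrite exprn_ge0.
split.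
- apply: (@zero_lem _ _ _ a 2 p (B * (8 + 2 ^+ p) / 6)) => //.
  + by rewrite (pow2_neq _ hp1).
  + by rewrite divr_ge0 // mulr_ge0 // addr_ge0.
  + move=> z; rewrite -(ler_pM2r (_ : (0:R) < 6)) //.
    have -> : `|a z| * 6 = `|a z *+ 6| by rewrite normrMn mulr_natr.
    rewrite (idA _ (c z)) -a2 -c2; apply: le_trans (ler_normB _ _) _.
    have H8 : `|a z + c z| *+ 8 <= (B * `|z| ^+ p) *+ 8 by rewrite lerMn2r hb orbT.
    rewrite normrMn; apply: le_trans (lerD H8 (hb _)) _.
    rewrite N2 le_eqVlt; apply/orP; left; apply/eqP.
    by move: (`|z| ^+ p) (2 ^+ p : R) => n q; field.
- apply: (@zero_lem _ _ _ c 8 p (B * (2 + 2 ^+ p) / 6)) => //.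
  + by rewrite (pow2_neq _ hp3).
  + by rewrite divr_ge0 // mulr_ge0 // addr_ge0.
  + move=> z; rewrite -(ler_pM2r (_ : (0:R) < 6)) //.
    have -> : `|c z| * 6 = `|c z *+ 6| by rewrite normrMn mulr_natr.
    rewrite (idC (a z)) -a2 -c2; apply: le_trans (ler_normB _ _) _.
    have H2 : `|a z + c z| *+ 2 <= (B * `|z| ^+ p) *+ 2 by rewrite lerMn2r hb orbT.
    rewrite [`|(_ + _) *+ 2|]normrMn; apply: le_trans (lerD (hb _) H2) _.
    rewrite N2 le_eqVlt; apply/orP; left; apply/eqP.
    by move: (`|z| ^+ p) (2 ^+ p : R) => n q; field.
Qed.
End H5.

Module H6.
Import H H2 H3 H4 H5.
Set Implicit Arguments. Unset Strict Implicit. Unset Printing Implicit Defensive.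
Import numFieldNormedType.Exports.
Local Open Scope classical_set_scope.
Local Open Scope ring_scope.
Ltac zlin := apply: emb_inj; rewrite ?(embD, embB, embN, embMn, embMz, emb0); ring.

Lemma cubic_scale (R : pzRingType) (X : zmodType) (V : lmodType R) (G : X -> V) (s : R) :
  cubic_map G -> cubic_map (fun z => s *: G z).
Proof.
move=> H x y /=; rewrite !scalerMnr -!scalerBr -scalerDr -scalerBr H //.
Qed.

Lemma additive_scale (R : pzRingType) (X : zmodType) (V : lmodType R) (G : X -> V) (s : R) :
  additive_map G -> additive_map (fun z => s *: G z).
Proof. by move=> H x y /=; rewrite H scalerDr. Qed.

Lemma additive_sub (X Y : zmodType) (F G : X -> Y) :
  additive_map F -> additive_map G -> additive_map (fun z => F z - G z).
Proof. move=> hF hG x y; rewrite hF hG; move: (F x) (F y) (G x) (G y) => a b c d; zlin. Qed.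

Lemma cubic_sub (X Y : zmodType) (F G : X -> Y) :
  cubic_map F -> cubic_map G -> cubic_map (fun z => F z - G z).
Proof.
move=> hF hG x y /=.
apply/eqP; rewrite -subr_eq0; apply/eqP.
have e1 := hF x y; have e2 := hG x y.
have E : forall a1 a2 a3 a4 a5 b1 b2 b3 b4 b5 : Y,
  a1 - a2 *+ 3 + a3 *+ 3 - a4 = a5 *+ 6 -> b1 - b2 *+ 3 + b3 *+ 3 - b4 = b5 *+ 6 ->
  (a1 - b1) - (a2 - b2) *+ 3 + (a3 - b3) *+ 3 - (a4 - b4) - (a5 - b5) *+ 6 = 0.
  move=> a1 a2 a3 a4 a5 b1 b2 b3 b4 b5 h1 h2.
  have eqsub : forall u v : Y, u = v -> 0 = u - v by move=> u v ->; rewrite subrr.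
  apply: (comb_step (c := 1%Z) (eqsub _ _ h1)); apply: (comb_step (c := (-1)%Z) (eqsub _ _ h2)).
  zlin.
exact: E e1 e2.
Qed.

Lemma Dg_bound (R : realType) (X Y : normedModType R) (f : X -> Y) (p k : nat) (t : R) :
  0 <= t -> (forall x y, `|Dmix f x y| <= t * (`|x| ^+ p + `|y| ^+ p)) ->
  forall x y, `|Dmix (fun z => f (z *+ 2) - f z *+ k) x y| <=
    (t * (2 ^+ p + k%:R)) * (`|x| ^+ p + `|y| ^+ p).
Proof.
move=> t0 hD x y.
have -> : Dmix (fun z => f (z *+ 2) - f z *+ k) x y = Dmix f (x *+ 2) (y *+ 2) - Dmix f x y *+ k.
  by rewrite -Dmix_2 -Dmix_lin.
apply: le_trans (ler_normB _ _) _.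
have Hk : `|Dmix f x y| *+ k <= (t * (`|x| ^+ p + `|y| ^+ p)) *+ k.
  by rewrite lerMn2r hD orbT.
rewrite normrMn; apply: le_trans (lerD (hD _ _) Hk) _.
rewrite !normrMn -![`|_| *+ 2]mulr_natr !exprMn le_eqVlt; apply/orP; left; apply/eqP.
by move: (`|x| ^+ p) (`|y| ^+ p) ((2:R) ^+ p) => a b c; ring.
Qed.
End H6.

Module H7.
Import H H2 H3 H4 H5 H6.
Set Implicit Arguments. Unset Strict Implicit. Unset Printing Implicit Defensive.
Import numFieldNormedType.Exports.
Local Open Scope classical_set_scope.
Local Open Scope ring_scope.
Ltac zlin := apply: emb_inj; rewrite ?(embD, embB, embN, embMn, embMz, emb0); ring.

Lemma idgh (V : zmodType) (a b c d : V) :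
  (a - b *+ 2 - c) - (a - b *+ 8 - d) = b *+ 6 - (c - d).
Proof. zlin. Qed.

Lemma idfin (R : numFieldType) (V : lmodType R) (a u v : V) :
  a - - ((6:R)^-1 *: v) - (6:R)^-1 *: u = (6:R)^-1 *: (a *+ 6 - (u - v)).
Proof.
have six : (6:R) != 0 by rewrite pnatr_eq0.
rewrite scalerBr scalerBr -[a *+ 6]scaler_nat scalerA mulVf // scale1r.
move: (6^-1 *: v) (6^-1 *: u) => w z; zlin.
Qed.

Lemma main (R : realType) (X : normedModType R)
  (Y : completeNormedModType R) (p theta : nat)
  (hp1 : p <> 1%N) (hp3 : p <> 3%N) (f : X -> Y)
  (hodd : odd_map f)
  (hD : forall x y : X,
      `|Dmix f x y| <= theta%:R * (`|x| ^+ p + `|y| ^+ p)) :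
  exists A : X -> Y, exists C : X -> Y,
    [/\ additive_map A, cubic_map C,
      (forall x : X,
        `|f x - A x - C x| <=
          theta%:R / 6 * ((`|2 ^+ p - 2| : R)^-1 + (`|2 ^+ p - 8| : R)^-1)
            * `|x| ^+ p)
    & forall A' C' : X -> Y, additive_map A' -> cubic_map C' ->
        (forall x : X,
          `|f x - A' x - C' x| <=
            theta%:R / 6 * ((`|2 ^+ p - 2| : R)^-1 + (`|2 ^+ p - 8| : R)^-1)
              * `|x| ^+ p) ->
        A' = A /\ C' = C].
Proof.
set t : R := theta%:R.
have t0 : 0 <= t by rewrite ler0n.
have hY := @tfree_lmod R Y.
have F0 := odd0 hY hodd.
have K x : `|f (x *+ 4) - f (x *+ 2) *+ 10 + f x *+ 16| <= t * `|x| ^+ p.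
  have := hD x x; rewrite DxxE // normrMn -mulr2n mulrnAr lerMn2r /=; exact.
pose g := fun z => f (z *+ 2) - f z *+ 2.
pose h := fun z => f (z *+ 2) - f z *+ 8.
have hg x : `|g (x *+ 2) - g x *+ 8| <= t * `|x| ^+ p by rewrite /g gE.
have hh x : `|h (x *+ 2) - h x *+ 2| <= t * `|x| ^+ p by rewrite /h hE.
have og x : g (- x) = - g x.
  rewrite /g mulNrn !hodd mulNrn; move: (f (x *+ 2)) (f x) => a b. Time zlin.
have oh x : h (- x) = - h x.
  rewrite /h mulNrn !hodd mulNrn; move: (f (x *+ 2)) (f x) => a b; zlin.
have p8 : (2:R) ^+ p != 8%:R by apply: (pow2_neq _ hp3).
have p2 : (2:R) ^+ p != 2%:R by apply: (pow2_neq _ hp1).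
have [Ug [bg sg ogU dg]] := stab2 t0 (isT : (0 < 8)%N) p8 hg.
have [Uh [bh sh ohU dh]] := stab2 t0 (isT : (0 < 2)%N) p2 hh.
have M0 k : 0 <= t * (2 ^+ p + k%:R) by rewrite mulr_ge0 // addr_ge0 ?exprn_ge0.
have dg0 := dg _ (M0 2%N) (Dg_bound 2 t0 hD).
have dh0 := dh _ (M0 8%N) (Dg_bound 8 t0 hD).
have cUg : cubic_map Ug := cubic_of hY dg0 sg (ogU og).
have aUh : additive_map Uh := additive_of hY dh0 sh (ohU oh).
set C := fun z => (6:R)^-1 *: Ug z.
set A := fun z => - ((6:R)^-1 *: Uh z).
have bound : forall x, `|f x - A x - C x| <=
    t / 6 * ((`|2 ^+ p - 2| : R)^-1 + (`|2 ^+ p - 8| : R)^-1) * `|x| ^+ p.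
  move=> x; rewrite /A /C idfin -(idgh (f (x *+ 2)) (f x)) -/(g x) -/(h x).
  rewrite normrZ ger0_norm ?invr_ge0 ?ler0n //.
  apply: le_trans (ler_wpM2l _ (ler_normB _ _)) _; first by rewrite invr_ge0 ler0n.
  rewrite (distrC (g x)) (distrC (h x)).
  apply: le_trans (ler_wpM2l _ (lerD (bg x) (bh x))) _; first by rewrite invr_ge0 ler0n.
  rewrite le_eqVlt; apply/orP; left; apply/eqP.
  by move: (`|x| ^+ p) (`|2 ^+ p - 2| : R) (`|2 ^+ p - 8| : R) => n a b; ring.
have aA : additive_map A by move=> x y; rewrite /A aUh scalerDr opprD.
have cC : cubic_map C by apply: cubic_scale.
exists A, C; split => //.
move=> A' C' hA' hC' hb'.
set Bc := t / 6 * ((`|2 ^+ p - 2| : R)^-1 + (`|2 ^+ p - 8| : R)^-1).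
have Bc0 : 0 <= Bc by rewrite /Bc mulr_ge0 ?divr_ge0 ?ler0n // addr_ge0 // invr_ge0.
have bnd z : `|(A' z - A z) + (C' z - C z)| <= (Bc + Bc) * `|z| ^+ p.
  have -> : (A' z - A z) + (C' z - C z) = (f z - A z - C z) - (f z - A' z - C' z).
    by move: (A' z) (A z) (C' z) (C z) (f z) => a1 a2 a3 a4 a5; zlin.
  apply: le_trans (ler_normB _ _) _; rewrite mulrDl; exact: lerD (bound z) (hb' z).
have [ua uc] := uniq_lem hp1 hp3 (addr_ge0 Bc0 Bc0) (additive_sub hA' aA) (cubic_sub hC' cC) bnd.
split; apply: funext => z; apply/eqP; rewrite -subr_eq0; apply/eqP; [exact: ua | exact: uc].
Qed.
End H7.

Theorem corollary3p4 (R : realType) (X : normedModType R)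
  (Y : completeNormedModType R) (p theta : nat)
  (hp1 : p <> 1%N) (hp3 : p <> 3%N) (f : X -> Y)
  (hodd : odd_map f)
  (hD : forall x y : X,
      `|Dmix f x y| <= theta%:R * (`|x| ^+ p + `|y| ^+ p)) :
  exists A : X -> Y, exists C : X -> Y,
    [/\ additive_map A, cubic_map C,
      (forall x : X,
        `|f x - A x - C x| <=
          theta%:R / 6 * ((`|2 ^+ p - 2| : R)^-1 + (`|2 ^+ p - 8| : R)^-1)
            * `|x| ^+ p)
    & forall A' C' : X -> Y, additive_map A' -> cubic_map C' ->
        (forall x : X,
          `|f x - A' x - C' x| <=
            theta%:R / 6 * ((`|2 ^+ p - 2| : R)^-1 + (`|2 ^+ p - 8| : R)^-1)
              * `|x| ^+ p) ->
        A' = A /\ C' = C].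
Proof. exact: (@H7.main R X Y p theta hp1 hp3 f hodd hD). Qed.
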